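(* Let $\Omega\subset\mathbb{R}^n$ be a bounded domain, $(d_1,d_2,f,\kappa)\in(0,\infty)^4$, and for $\ell\in\{1,2\}$ let $\gamma_\ell:\Omega\times\Omega\to[0,\infty)$ be measurable with $\int_\Omega\gamma_\ell(y,x)\,\mathrm{d}y=\int_\Omega\gamma_\ell(x,y)\,\mathrm{d}y\le\gamma_\infty<\infty$ for $x\in\Omega$, some $\gamma_\infty\ge1$. Let $(u^0,v^0)\in X^+\times X^+$ and let $(u,v)\in C^1([0,\infty),X^+\times X^+)$ be the solution to $$\partial_t u=d_1\Gamma_{\gamma_1}u-uv^2+f(1-u),\quad \partial_t v=d_2\Gamma_{\gamma_2}v+uv^2-(f+\kappa)v\ \text{ in }(0,\infty)\times\Omega,\quad (u,v)(0)=(u^0,v^0).$$ Then for $(t,x)\in[0,\infty)\times\Omega$, $$0\le u(t,x)\le1+e^{-ft}(\|u^0\|_\infty-1)_+,$$ $$0\le(u+v)(t,x)\le e^{-tf}\|u^0+v^0\|_\infty+\frac{1-e^{-tf}}{f}\Big[2\big(|d_1-d_2|\gamma_\infty+md_2\big)(1+\|u^0\|_\infty)+f\Big],$$ where $m:=\operatorname*{ess\,sup}_{x\in\Omega}\int_\Omega|(\gamma_1-\gamma_2)(x,y)|\,\mathrm{d}y\le2\gamma_\infty$. In particular $\limsup_{t\to\infty}\|u(t)\|_\infty\le1$, and if $\|u^0\|_\infty\le1$ then $\|u(t)\|_\infty\le1$ for all $t\ge0$.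
   Context: $X:=L_\infty(\Omega)$, $X^+:=\{z\in X: z\ge0\text{ a.e.}\}$, $\Gamma_\gamma z(x):=\int_\Omega\gamma(x,y)(z(y)-z(x))\,\mathrm{d}y$. *)

(* Defs.v *)
From HB Require Import structures.
From mathcomp Require Import all_boot all_order all_algebra.
From mathcomp Require Import all_classical all_reals all_analysis.
Set Implicit Arguments. Unset Strict Implicit. Unset Printing Implicit Defensive.
Import Order.TTheory GRing.Theory Num.Theory.
Local Open Scope classical_set_scope.
Local Open Scope ring_scope.

Definition Linf_norm {d} {T : measurableType d} {R : realType}
  (mu : {measure set T -> \bar R}) (Om : set T) (g : T -> R) : \bar R :=
  ereal_inf [set c : \bar R | {ae mu, forall x, Om x -> ((`|g x|)%:E <= c)%E}].

(* g represents an element of X = L_infty(Omega). *)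
Definition inLinf {d} {T : measurableType d} {R : realType}
  (mu : {measure set T -> \bar R}) (Om : set T) (g : T -> R) : Prop :=
  measurable_fun Om g /\ (Linf_norm mu Om g < +oo)%E.

(* g represents an element of X^+ = { z in X : z >= 0 a.e. }. *)
Definition inLinf_pos {d} {T : measurableType d} {R : realType}
  (mu : {measure set T -> \bar R}) (Om : set T) (g : T -> R) : Prop :=
  inLinf mu Om g /\ {ae mu, forall x, Om x -> 0 <= g x}.

Definition Linf_eq {d} {T : measurableType d} {R : realType}
  (mu : {measure set T -> \bar R}) (Om : set T) (g h : T -> R) : Prop :=
  {ae mu, forall x, Om x -> g x = h x}.

Definition Gamma {d} {T : measurableType d} {R : realType}
  (mu : {measure set T -> \bar R}) (Om : set T) (gam : T -> T -> R)
  (z : T -> R) (x : T) : R :=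
  \int[mu]_(y in Om) (gam x y * (z y - z x)).

Definition C1_Linf {d} {T : measurableType d} {R : realType}
  (mu : {measure set T -> \bar R}) (Om : set T) (u u' : R -> T -> R) : Prop :=
  (forall t, 0 <= t -> inLinf mu Om (u t) /\ inLinf mu Om (u' t)) /\
  (forall t, 0 <= t -> forall e : R, 0 < e -> exists2 del : R, 0 < del &
     forall h : R, h != 0 -> `|h| < del -> 0 <= t + h ->
       (Linf_norm mu Om (fun x => ((u (t + h) x - u t x) / h - u' t x)%R)
          <= e%:E)%E) /\
  (forall t, 0 <= t -> forall e : R, 0 < e -> exists2 del : R, 0 < del &
     forall s : R, 0 <= s -> `|s - t| < del ->
       (Linf_norm mu Om (fun x => (u' s x - u' t x)%R) <= e%:E)%E).

(* Main.v *)
Require Import Defs.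
From HB Require Import structures.
From mathcomp Require Import all_boot all_order all_algebra.
From mathcomp Require Import all_classical all_reals all_analysis.
From mathcomp Require Import measurable_realfun ring lra.
Import Order.TTheory GRing.Theory Num.Theory.
Local Open Scope classical_set_scope.
Local Open Scope ring_scope.

Set Implicit Arguments. Unset Strict Implicit.


Lemma ae_vac (R : realType) d (T : measurableType d)
  (mu : {measure set T -> \bar R}) (Om : set T) (P : T -> Prop) :
  {ae mu, forall x, Om x -> False} -> {ae mu, forall x, Om x -> P x}.
Proof. by apply: filterS => x H Ox; case: (H Ox). Qed.

Lemma ae_lim (R : realType) d (T : measurableType d)
  (mu : {measure set T -> \bar R}) (Om : set T) (a : T -> R) (r : R) :
  (forall n : nat, {ae mu, forall x, Om x -> a x <= r + n.+1%:R^-1}) ->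
  {ae mu, forall x, Om x -> a x <= r}.
Proof.
move=> H; have := ae_foralln H; apply: filterS => x Hx Ox.
rewrite leNgt; apply/negP => /ltr_add_invr [k Hk].
by move: (Hx k Ox); rewrite leNgt Hk.
Qed.

Lemma Linf_ae (R : realType) d (T : measurableType d)
  (mu : {measure set T -> \bar R}) (Om : set T) (g : T -> R) :
  (Linf_norm mu Om g < +oo)%E ->
  {ae mu, forall x, Om x -> `|g x| <= fine (Linf_norm mu Om g)}.
Proof.
rewrite /Linf_norm; set S := [set c | _].
case E : (ereal_inf S) => [r| |] // _.
- apply: ae_lim => n.
  have e0 : 0 < n.+1%:R^-1 :> R by rewrite invr_gt0 ltr0n.
  have fS : ereal_inf S \is a fin_num by rewrite E.
  have [c Sc Hc] := @lb_ereal_inf_adherent R S _ e0 fS.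
  move: Sc; apply: filterS => x H Ox; rewrite -lee_fin; apply: (le_trans (H Ox)).
  by rewrite E /= in Hc; apply: ltW.
- have [c Sc Hc] : exists2 c, S c & (c < (-1)%:E)%E by apply: ereal_inf_lt; rewrite E ltNyr.
  apply: ae_vac; move: Sc; apply: filterS => x H Ox.
  have := le_lt_trans (H Ox) Hc; rewrite lte_fin => /(le_lt_trans (normr_ge0 _)).
  by rewrite ltr0N1.
Qed.

Lemma ae_Linf (R : realType) d (T : measurableType d)
  (mu : {measure set T -> \bar R}) (Om : set T) (g : T -> R) (c : R) :
  {ae mu, forall x, Om x -> `|g x| <= c} -> (Linf_norm mu Om g <= c%:E)%E.
Proof.
move=> H; apply: ereal_inf_lbound; move: H; apply: filterS => x H Ox.
by rewrite lee_fin H.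
Qed.

Lemma Linf_le_ae (R : realType) d (T : measurableType d)
  (mu : {measure set T -> \bar R}) (Om : set T) (g : T -> R) (e : R) :
  0 <= e -> (Linf_norm mu Om g <= e%:E)%E ->
  {ae mu, forall x, Om x -> `|g x| <= e}.
Proof.
move=> e0 He; have := @Linf_ae R d T mu Om g (le_lt_trans He (ltry e : (e%:E < +oo)%E)).
apply: filterS => x H Ox; apply: (le_trans (H Ox)).
move: He; case: (Linf_norm mu Om g) => //= r; by rewrite lee_fin.
Qed.

Lemma Linf_fine_ge0 (R : realType) d (T : measurableType d)
  (mu : {measure set T -> \bar R}) (Om : set T) (g : T -> R) :
  0 <= fine (Linf_norm mu Om g).
Proof.
rewrite /Linf_norm; set S := [set c | _].
case E : (ereal_inf S) => [r| |] //=.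
rewrite leNgt; apply/negP => r0.
have [c Sc Hc] : exists2 c, S c & (c < 0%:E)%E by apply: ereal_inf_lt; rewrite E lte_fin.
have : S -oo%E.
  move: Sc; apply: filterS => x H Ox; exfalso.
  have := le_lt_trans (H Ox) Hc; rewrite lte_fin.
  by rewrite ltNge normr_ge0.
move/ereal_inf_lbound; rewrite E.
by [].
Qed.


Lemma int_g (R : realType) d (T : measurableType d)
  (mu : {measure set T -> \bar R}) (Om : set T) (g : T -> R) (G : R) :
  measurable Om -> measurable_fun Om g -> (forall y, Om y -> 0 <= g y) ->
  (\int[mu]_(y in Om) (g y)%:E <= G%:E)%E ->
  mu.-integrable Om (EFin \o g).
Proof.
move=> mOm mg g0 gG; apply/integrableP; split; first exact/measurable_EFinP.
under eq_integral => y /set_mem Oy do rewrite /= ger0_norm ?g0 //.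
exact: (le_lt_trans gG (ltry _)).
Qed.

Lemma int_gh (R : realType) d (T : measurableType d)
  (mu : {measure set T -> \bar R}) (Om : set T) (g h : T -> R) (C : R) :
  measurable Om -> mu.-integrable Om (EFin \o g) -> measurable_fun Om h ->
  {ae mu, forall y, Om y -> `|h y| <= C} ->
  mu.-integrable Om (EFin \o (fun y => g y * h y)).
Proof.
move=> mOm ig mh hC; have /integrableP [mg gfin] := ig.
have mg' : measurable_fun Om g by apply/measurable_EFinP.
apply/integrableP; split.
  by apply/measurable_EFinP; apply: measurable_funM.
suff H1 : (\int[mu]_(y in Om) `|(EFin \o (fun z => (g z * h z)%R)) y| <=
   \int[mu]_(y in Om) (`|C|%:E * `|(EFin \o g) y|))%E.
  apply: (le_lt_trans H1).
  rewrite ge0_integralZl //; last by apply: measurableT_comp.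
  by rewrite lte_mul_pinfty.
  have m1 : measurable_fun Om (fun y => `|(EFin \o (fun z => (g z * h z)%R)) y|%E).
    apply: measurableT_comp => //; apply/measurable_EFinP; exact: measurable_funM.
  have m2 : measurable_fun Om (fun y => (`|C|%:E * `|(EFin \o g) y|)%E).
    by apply: emeasurable_funM => //; apply: measurableT_comp.
  apply: ae_ge0_le_integral => //.
  move: hC; apply: filterS => y H Oy /=.
    rewrite -EFinM lee_fin normrM mulrC ler_wpM2r //.
    by apply: (le_trans (H Oy)); apply: ler_norm.
Qed.

Lemma ae_le_Rint (R : realType) d (T : measurableType d)
  (mu : {measure set T -> \bar R}) (Om : set T) (f1 f2 : T -> R) :
  measurable Om -> mu.-integrable Om (EFin \o f1) -> mu.-integrable Om (EFin \o f2) ->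
  {ae mu, forall y, Om y -> f1 y <= f2 y} ->
  \int[mu]_(y in Om) f1 y <= \int[mu]_(y in Om) f2 y.
Proof.
move=> mOm i1 i2 H; rewrite -subr_ge0 -RintegralB //.
have mF : measurable_fun Om (EFin \o (fun y => f2 y - f1 y)).
  apply/measurable_EFinP; apply: measurable_funB; apply/measurable_EFinP.
  - by case/integrableP: i2.
  - by case/integrableP: i1.
rewrite /Rintegral (ae_eq_integral (funepos (EFin \o (fun y => f2 y - f1 y)))) //.
- by apply: fine_ge0; apply: integral_ge0 => y _; apply: funepos_ge0.
- exact: measurable_funepos.
- move: H; apply: filterS => y H Oy; rewrite funeposE /= max_l //.
  by rewrite lee_fin subr_ge0 H.
Qed.

Lemma Rint_le_G (R : realType) d (T : measurableType d)
  (mu : {measure set T -> \bar R}) (Om : set T) (g : T -> R) (G : R) :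
  (forall y, Om y -> 0 <= g y) ->
  (\int[mu]_(y in Om) (g y)%:E <= G%:E)%E ->
  \int[mu]_(y in Om) g y <= G.
Proof.
move=> g0 hG.
have h0 : (0 <= \int[mu]_(y in Om) (g y)%:E)%E.
  by apply: integral_ge0 => y Oy; rewrite lee_fin g0.
rewrite /Rintegral /=; move: h0 hG.
by case: (\int[mu]_(y in Om) (g y)%:E)%E => //= r _; rewrite lee_fin.
Qed.


Lemma sec_meas (R : realType) d (T : measurableType d) (Om : set T)
  (gam : T -> T -> R) (x : T) :
  measurable Om -> measurable_fun (Om `*` Om) (fun p : T * T => gam p.1 p.2) ->
  Om x -> measurable_fun Om (gam x).
Proof.
move=> mOm mg Ox.
have := @measurable_comp _ _ _ T (T * T)%type _ (Om `*` Om)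
  (fun p : T * T => gam p.1 p.2) Om (pair x) (measurableX mOm mOm) _ mg.
apply.
- by move=> _ [y Oy <-].
- apply: (measurable_funS measurableT) => //; exact: pair1_measurable.
Qed.

Lemma Gam_up (R : realType) d (T : measurableType d)
  (mu : {measure set T -> \bar R}) (Om : set T) (g z : T -> R) (a c G C : R) :
  measurable Om -> mu.-integrable Om (EFin \o g) -> (forall y, Om y -> 0 <= g y) ->
  \int[mu]_(y in Om) g y <= G -> measurable_fun Om z ->
  {ae mu, forall y, Om y -> `|z y| <= C} ->
  {ae mu, forall y, Om y -> z y <= c} -> a <= c ->
  \int[mu]_(y in Om) (g y * (z y - a)) <= G * (c - a).
Proof.
move=> mOm ig g0 gG mz zC zc ac.
have i1 : mu.-integrable Om (EFin \o (fun y => g y * (z y - a))).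
  apply: (@int_gh _ _ _ mu Om g (fun y => z y - a) (C + `|a|)) => //.
    exact: (measurable_funB mz (measurable_cst a)).
  move: zC; apply: filterS => y H Oy; apply: (le_trans (ler_normB _ _)).
  by rewrite lerD2r H.
have i2 : mu.-integrable Om (EFin \o (fun y => g y * (c - a))).
  apply: (@int_gh _ _ _ mu Om g (fun y => c - a) `|c - a|) => //.
  all: try exact: measurable_cst.
  all: try (by apply: aeW => y _).
have Hle : \int[mu]_(y in Om) (g y * (z y - a)) <= \int[mu]_(y in Om) (g y * (c - a)).
  apply: (ae_le_Rint mOm i1 i2).
  move: zc; apply: filterS => y H Oy.
  by rewrite ler_wpM2l ?g0 // lerB // H.
apply: (le_trans Hle).
by rewrite RintegralZr // ler_wpM2r // subr_ge0.
Qed.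

Lemma Gam_abs (R : realType) d (T : measurableType d)
  (mu : {measure set T -> \bar R}) (Om : set T) (k h : T -> R) (B : R) :
  measurable Om -> mu.-integrable Om (EFin \o k) -> measurable_fun Om h ->
  {ae mu, forall y, Om y -> `|h y| <= B} ->
  `|\int[mu]_(y in Om) (k y * h y)| <= \int[mu]_(y in Om) `|k y| * B.
Proof.
move=> mOm ik mh hB.
have i1 := int_gh mOm ik mh hB.
have ik' : mu.-integrable Om (EFin \o (fun y => `|k y|)) by apply: integrable_norm.
have i2 : mu.-integrable Om (EFin \o (fun y => `|k y| * B)).
  apply: (@int_gh _ _ _ mu Om _ (fun y => B) `|B|) => //.
  all: try exact: measurable_cst.
  all: try (by apply: aeW => y _).
apply: (le_trans (le_normr_Rintegral mOm i1)).
have i1' : mu.-integrable Om (EFin \o (fun y => `|k y * h y|)) by apply: integrable_norm.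
rewrite -RintegralZr //; apply: ae_le_Rint => //.
move: hB; apply: filterS => y H Oy.
by rewrite normrM; apply: ler_wpM2l => //; exact: H.
Qed.


Lemma ex2 (R : realType) (x : R) : 1 - x <= expR (- x).
Proof. by have := expR_ge1Dx (- x). Qed.

Lemma ex1 (R : realType) (x : R) : 0 <= x -> expR (- x) <= 1 - x + x ^+ 2.
Proof.
move=> x0; have h := expR_ge1Dx x.
have e0 := expR_gt0 x.
rewrite expRN; rewrite -(@ler_pM2r _ (expR x)) // mulVf ?gt_eqF //.
have : 0 <= 1 - x + x ^+ 2 by nra.
move=> H; apply: (le_trans _ (ler_wpM2l H h)); nra.
Qed.

Lemma ex3 (R : realType) (x : R) : 0 <= x -> x <= 1/2 -> expR x <= 1 + 2 * x.
Proof.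
move=> x0 x1; have h := ex2 x.
have e0 := expR_gt0 (- x).
have -> : expR x = (expR (- x))^-1 by rewrite expRN invrK.
rewrite -(@ler_pM2r _ (expR (- x))) // mulVf ?gt_eqF //.
have : 0 <= 1 + 2 * x by nra.
move=> H; apply: (le_trans _ (ler_wpM2l H h)); nra.
Qed.

Lemma small (R : realType) (a b Q del : R) : 0 < del ->
  (forall h, 0 < h -> h < del -> a <= b + h * Q) -> a <= b.
Proof.
move=> d0 H; apply/ler_addgt0Pr => e e0.
have q0 : 0 < `|Q| + 1 by have := normr_ge0 Q; lra.
pose h := Num.min (del / 2) (e / (`|Q| + 1)).
have h1 : h <= del / 2 by rewrite /h ge_min lexx.
have h2 : h <= e / (`|Q| + 1) by rewrite /h ge_min lexx orbT.
have hp : 0 < h.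
  rewrite /h lt_min; apply/andP; split; apply: divr_gt0 => //; lra.
have hd : h < del by lra.
have he : h * (`|Q| + 1) <= e by rewrite -ler_pdivlMr.
apply: (le_trans (H h hp hd)); rewrite lerD2l.
have := ler_norm Q; have := normr_ge0 Q; nra.
Qed.

Lemma prod3 (R : realType) (E D X P : R) : 0 <= E -> E <= 1 -> 0 <= X -> X <= P ->
  E * D * X <= `|D| * P.
Proof.
move=> E0 E1 X0 XP.
have hD := ler_norm D; have hD' := normr_ge0 D.
have h1 : E * D * X <= E * `|D| * X.
  by rewrite -!mulrA ler_wpM2l // ler_wpM2r.
apply: (le_trans h1); rewrite -mulrA.
have h2 : `|D| * X <= `|D| * P by rewrite ler_wpM2l.
have h3 : 0 <= `|D| * X by rewrite mulr_ge0.
nra.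
Qed.

Lemma RL (R : realType) (M : R -> R) (K f c0 : R) :
  0 < f -> 0 <= K ->
  M 0 <= c0 ->
  (exists C del, 0 < del /\ forall h, 0 < h -> h < del -> M h <= M 0 + h * C) ->
  (forall t, 0 < t -> forall eta, 0 < eta -> exists del, 0 < del /\
     forall h, 0 < h -> h < del -> M (t + h) <= M t + h * (K - f * M t + eta)) ->
  (forall t, 0 < t -> exists C del, 0 < del /\
     forall h, 0 < h -> h < del -> M t <= M (t - h) + h * C) ->
  forall t, 0 <= t -> M t <= K / f + expR (- (f * t)) * (c0 - K / f).
Proof.
move=> f0 K0 HM0 [C0 [d0 [d0p HP0]]] Hf Hb.
set k := K / f.
have Kk : K = k * f by rewrite /k mulfVK // gt_eqF.
set D := c0 - k.
pose B t := k + expR (- (f * t)) * D.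
have B0 : B 0 = c0 by rewrite /B mulr0 oppr0 expR0 mul1r /D addrC subrK.
move=> tt tt0; apply/ler_addgt0Pr => eps eps0.
suff G : forall t, 0 <= t -> M t <= B t + eps by exact: (G tt tt0).
move=> t2 t20; apply: contrapT => Ht2.
have {}Ht2 : B t2 + eps < M t2 by rewrite ltNge; apply/negP.
pose S := [set t | 0 <= t /\ forall s, 0 <= s -> s <= t -> M s <= B s + eps].
have S0 : S 0.
  split => // s s0 s0'.
  have -> : s = 0 by apply/le_anti/andP.
  rewrite B0; lra.
have Sub : forall t, S t -> t < t2.
  move=> t [_ Ht]; rewrite ltNge; apply/negP => tt2.
  have := Ht t2 t20 tt2; lra.
have hsS : has_sup S.
  split; first by exists 0.
  by exists t2 => t St; apply/ltW/Sub.
set t1 := sup S.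
have t1ge : 0 <= t1 by apply: sup_upper_bound.
have A : forall s, 0 <= s -> s < t1 -> M s <= B s + eps.
  move=> s s0 st.
  have st' : 0 < t1 - s by rewrite subr_gt0.
  have [t' [t0' Ht] Hts] := sup_adherent st' hsS.
  apply: Ht => //; rewrite -/t1 in Hts; lra.
have fD := normr_ge0 D.
have Bc : M t1 <= B t1 + eps.
  case: (eqVneq t1 0) => [-> | t1n0]; first by rewrite B0; lra.
  have t1p : 0 < t1 by rewrite lt_neqAle eq_sym t1n0.
  have [C [del [delp Hd]]] := Hb t1 t1p.
  have i2f : 0 < 1 / (2 * f) by rewrite divr_gt0 // mulr_gt0.
  apply: (@small _ _ _ (C + 2 * f * `|D|) (Num.min del (Num.min t1 (1 / (2 * f))))).
    by rewrite !lt_min delp t1p i2f.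
  move=> h hp; rewrite !lt_min => /and3P [h1 h2 h3].
  have := Hd h hp h1.
  have := A (t1 - h) ltac:(lra) ltac:(lra).
  have eB : expR (- (f * (t1 - h))) = expR (- (f * t1)) * expR (f * h).
    by rewrite -expRD; congr expR; ring.
  have fh2 : f * h <= 1 / 2.
    by move: h3; rewrite ltr_pdivlMr ?mulr_gt0 // => ?; lra.
  have X1 := ex3 (ltW (mulr_gt0 f0 hp)) fh2.
  have X0 := expR_ge1Dx (f * h).
  have E0 := expR_ge0 (- (f * t1)).
  have E1 : expR (- (f * t1)) <= 1 by rewrite expR_le1 oppr_le0 mulr_ge0 // ltW.
  have P := @prod3 R (expR (- (f * t1))) D (expR (f * h) - 1) (2 * (f * h))
    E0 E1 ltac:(lra) ltac:(lra).
  rewrite /B eB.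
  have e : expR (- (f * t1)) * expR (f * h) * D =
    expR (- (f * t1)) * D + expR (- (f * t1)) * D * (expR (f * h) - 1) by ring.
  rewrite e; nra.
have Cc : exists del, 0 < del /\ forall h, 0 < h -> h < del ->
    M (t1 + h) <= B (t1 + h) + eps.
  case: (eqVneq t1 0) => [t1z | t1n0].
    rewrite t1z.
    have q0 : 0 < `|C0| + f * `|D| + 1.
      by have := normr_ge0 C0; have := mulr_ge0 (ltW f0) fD; lra.
    exists (Num.min d0 (eps / (`|C0| + f * `|D| + 1))); split.
      by rewrite lt_min d0p divr_gt0.
    move=> h hp; rewrite lt_min => /andP [h1 h2].
    rewrite add0r.
    have := HP0 h hp h1.
    have hq : h * (`|C0| + f * `|D| + 1) <= eps.
      by rewrite -ler_pdivlMr // ltW.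
    have Y1 := ex2 (f * h).
    have Y0 : expR (- (f * h)) <= 1 by rewrite expR_le1 oppr_le0 mulr_ge0 // ltW.
    have hC := ler_norm C0.
    have P := @prod3 R 1 D (1 - expR (- (f * h))) (f * h) ler01 (lexx 1)
       ltac:(lra) ltac:(lra).
    rewrite mul1r in P.
    have hC' : h * C0 <= h * `|C0| by rewrite ler_wpM2l // ltW.
    have e1 : `|D| * (f * h) = h * (f * `|D|) by ring.
    have hh : 0 <= h * 1 by lra.
    have e2 : h * (`|C0| + f * `|D| + 1) = h * `|C0| + h * (f * `|D|) + h * 1 by ring.
    have e3 : expR (- (f * h)) * D = D + - D * (1 - expR (- (f * h))) by ring.
    rewrite /B e3 /D; rewrite /D in e1 e2 P hq; move=> HMh. have s1 : M h <= c0 + h * `|C0| := le_trans HMh (lerD HM0 hC'). have s2 : h * `|C0| + `|c0 - k| * (f * h) <= eps. { apply: le_trans hq; rewrite e2 e1 -addrA lerD2l lerDl; exact: hh. } lra.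
  have t1p : 0 < t1 by rewrite lt_neqAle eq_sym t1n0.
  have eta0 : 0 < f * eps / 2 by rewrite divr_gt0 // mulr_gt0.
  have [del [delp Hd]] := Hf t1 t1p _ eta0.
  have q0 : 0 < 2 * (`|D| * f + 1) by have := mulr_ge0 fD (ltW f0); lra.
  exists (Num.min del (Num.min (1 / f) (eps / (2 * (`|D| * f + 1))))); split.
    by rewrite !lt_min delp divr_gt0 //= divr_gt0.
  move=> h hp; rewrite !lt_min => /and3P [h1 h2 h3].
  have := Hd h hp h1.
  have hf1 : h * f <= 1 by move: h2; rewrite ltr_pdivlMr // => ?; lra.
  have hq : h * (2 * (`|D| * f + 1)) <= eps by rewrite -ler_pdivlMr // ltW.
  have Mb : M t1 * (1 - h * f) <= (B t1 + eps) * (1 - h * f).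
    by rewrite ler_wpM2r // subr_ge0.
  have eB : expR (- (f * (t1 + h))) = expR (- (f * t1)) * expR (- (f * h)).
    by rewrite -expRD; congr expR; ring.
  have Z1 := ex1 (ltW (mulr_gt0 f0 hp)).
  have Z0 := ex2 (f * h).
  have E0 := expR_ge0 (- (f * t1)).
  have E1 : expR (- (f * t1)) <= 1 by rewrite expR_le1 oppr_le0 mulr_ge0 // ltW.
  have P := @prod3 R (expR (- (f * t1))) (- D) (expR (- (f * h)) - 1 + f * h)
     ((f * h) ^+ 2) E0 E1 ltac:(lra) ltac:(lra).
  rewrite normrN in P.
  have P2 : `|D| * (f * h) ^+ 2 <= f * h * (eps / 2).
    have : `|D| * f * h <= eps / 2 by nra.
    have fh0 : 0 <= f * h by rewrite mulr_ge0 // ltW.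
    move=> H; rewrite expr2.
    have : (`|D| * f * h) * (f * h) <= eps / 2 * (f * h) by rewrite ler_wpM2r.
    move=> H2; nra.
  rewrite /B eB.
  move: Mb; rewrite /B => Mb.
  rewrite Kk; nra.
have [del [delp Hd]] := Cc.
have St : S (t1 + del / 2).
  split; first lra.
  move=> s s0 sle.
  case: (ltrgtP s t1) => [slt | sgt | ->].
  - exact: A.
  - have -> : s = t1 + (s - t1) by ring.
    apply: Hd; lra.
  - exact: Bc.
have := sup_upper_bound hsS St; rewrite -/t1; lra.
Qed.


Lemma alg1 (R : realType) (X Y h e : R) : 0 < h -> `|X / h - Y| <= e -> X <= h * (Y + e).
Proof.
move=> hp H.
have H1 : X / h <= Y + e by have := le_trans (ler_norm _) H; lra.
have -> : X = h * (X / h) by rewrite mulrC divfK // gt_eqF.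
by rewrite ler_wpM2l // ltW.
Qed.

Lemma alg2 (R : realType) (X Y h e : R) : 0 < h -> `|X / (- h) - Y| <= e -> - X <= h * (Y + e).
Proof.
move=> hp H; apply: alg1 => //.
by rewrite mulNr -mulrN -invrN.
Qed.

Lemma comparison (R : realType) d (T : measurableType d)
  (mu : {measure set T -> \bar R}) (Om : set T) (w w' : R -> T -> R) (L K f c0 : R) :
  0 < f -> 0 <= L -> 0 <= K -> 0 <= c0 ->
  (forall t, 0 <= t -> exists C, {ae mu, forall x, Om x -> `|w t x| <= C}) ->
  (forall t, 0 <= t -> exists C, {ae mu, forall x, Om x -> `|w' t x| <= C}) ->
  (forall t, 0 <= t -> forall e, 0 < e -> exists2 del, 0 < del &
     forall h, h != 0 -> `|h| < del -> 0 <= t + h ->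
     {ae mu, forall x, Om x -> `|(w (t + h) x - w t x) / h - w' t x| <= e}) ->
  {ae mu, forall x, Om x -> w 0 x <= c0} ->
  (forall t, 0 < t -> forall c, 0 <= c -> {ae mu, forall x, Om x -> w t x <= c} ->
     {ae mu, forall x, Om x -> w' t x <= L * (c - w t x) + K - f * w t x}) ->
  forall t, 0 <= t ->
    {ae mu, forall x, Om x -> w t x <= K / f + expR (- (f * t)) * (c0 - K / f)}.
Proof.
move=> f0 L0 K0 c00 hw hw' hD h0 hE.
pose S t := [set c | 0 <= c /\ {ae mu, forall x, Om x -> w t x <= c}].
pose M t := inf (S t).
have Sne : forall t, 0 <= t -> S t !=set0.
  move=> t t0; have [C HC] := hw t t0; exists `|C|; split => //.
  move: HC; apply: filterS => x H Ox.
  by apply: (le_trans (ler_norm _)); apply: (le_trans (H Ox)); apply: ler_norm.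
have Slb : forall t, has_lbound (S t) by move=> t; exists 0 => c [].
have M5 : forall t c, 0 <= c -> {ae mu, forall x, Om x -> w t x <= c} -> M t <= c.
  by move=> t c c0' Hc; apply: (ge_inf (Slb t)).
have M3 : forall t, 0 <= t -> 0 <= M t.
  by move=> t t0; apply: lb_le_inf (Sne t t0) _ => c [].
have M4 : forall t, 0 <= t -> {ae mu, forall x, Om x -> w t x <= M t}.
  move=> t t0; apply: ae_lim => n.
  have e0 : 0 < n.+1%:R^-1 :> R by rewrite invr_gt0 ltr0n.
  have [c [_ Hc] Hlt] := inf_adherent e0 (conj (Sne t t0) (Slb t)).
  move: Hc; apply: filterS => x H Ox; apply: (le_trans (H Ox)); exact: ltW.
have RLa := @RL R M K f c0 f0 K0.
have ML : forall t, 0 <= t -> M t <= K / f + expR (- (f * t)) * (c0 - K / f).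
  apply: RLa.
  - exact: M5.
  - have [C HC] := hw' 0 (lexx 0).
    have [del delp Hd] := hD 0 (lexx 0) 1 ltr01.
    exists (`|C| + 1), del; split => // h hp hlt.
    have := Hd h (lt0r_neq0 hp) ltac:(by rewrite gtr0_norm) ltac:(by rewrite add0r ltW).
    rewrite add0r => A1.
    apply: M5; first by have := M3 0 (lexx 0); have := normr_ge0 C; nra.
    move: A1 HC (M4 0 (lexx 0)); apply: filterS3 => x h1 h2 h3 Ox.
    have k1 := alg1 hp (h1 Ox); have k3 := h3 Ox.
    have k2 : h * (w' 0 x + 1) <= h * (`|C| + 1).
      apply: ler_wpM2l; first exact: ltW.
      rewrite lerD2r; apply: (le_trans (ler_norm _)); apply: (le_trans (h2 Ox)).
      exact: ler_norm.
    lra.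
  - move=> t tp eta etap.
    have [del0 del0p Hd] := hD t (ltW tp) eta etap.
    have Lf : 0 < L + f by lra.
    exists (Num.min del0 (1 / (L + f))); split.
      by rewrite lt_min del0p divr_gt0.
    move=> h hp; rewrite lt_min => /andP [h1 h2].
    have hLf : h * (L + f) <= 1 by move: h2; rewrite ltr_pdivlMr // => ?; lra.
    have := Hd h (lt0r_neq0 hp) ltac:(by rewrite gtr0_norm) ltac:(lra).
    move=> A1.
    have Mt0 := M3 t (ltW tp).
    have A2 := hE t tp (M t) Mt0 (M4 t (ltW tp)).
    apply: M5.
      have : 0 <= M t * (1 - h * f) by rewrite mulr_ge0 //; nra.
      nra.
    move: A1 A2 (M4 t (ltW tp)); apply: filterS3 => x g1 g2 g3 Ox.
    have := alg1 hp (g1 Ox); have := g2 Ox; have := g3 Ox.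
    move=> k3 k2 k1.
    have k4 : 0 <= (M t - w t x) * (1 - h * L - h * f) by rewrite mulr_ge0 //; lra.
    nra.
  - move=> t tp.
    have [C HC] := hw' t (ltW tp).
    have [del0 del0p Hd] := hD t (ltW tp) 1 ltr01.
    exists (`|C| + 1), (Num.min del0 t); split.
      by rewrite lt_min del0p tp.
    move=> h hp; rewrite lt_min => /andP [h1 h2].
    have := Hd (- h) ltac:(by rewrite oppr_eq0 gt_eqF) ltac:(by rewrite normrN gtr0_norm) ltac:(lra).
    move=> A1.
    have th : 0 <= t - h by lra.
    apply: M5.
      by have := M3 _ th; have := normr_ge0 C; nra.
    move: A1 HC (M4 _ th); apply: filterS3 => x g1 g2 g3 Ox.
    have k1 := alg2 hp (g1 Ox); have k3 := g3 Ox.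
    have k2 : h * (w' t x + 1) <= h * (`|C| + 1).
      apply: ler_wpM2l; first exact: ltW.
      rewrite lerD2r; apply: (le_trans (ler_norm _)); apply: (le_trans (g2 Ox)).
      exact: ler_norm.
    lra.
move=> t t0; move: (M4 t t0); apply: filterS => x H Ox.
exact: (le_trans (H Ox) (ML t t0)).
Qed.


Lemma intRB (R : realType) d (T : measurableType d)
  (mu : {measure set T -> \bar R}) (D : set T) (f g : T -> R) :
  measurable D -> mu.-integrable D (EFin \o f) -> mu.-integrable D (EFin \o g) ->
  mu.-integrable D (EFin \o (fun y => f y - g y)).
Proof.
move=> mD i1 i2; apply: eq_integrable (integrableB mD i1 i2) => // y _ /=; rewrite ?EFinB ?EFinD.
Qed.

Lemma intRD (R : realType) d (T : measurableType d)
  (mu : {measure set T -> \bar R}) (D : set T) (f g : T -> R) :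
  measurable D -> mu.-integrable D (EFin \o f) -> mu.-integrable D (EFin \o g) ->
  mu.-integrable D (EFin \o (fun y => f y + g y)).
Proof.
move=> mD i1 i2; apply: eq_integrable (integrableD mD i1 i2) => // y _ /=; rewrite ?EFinB ?EFinD.
Qed.

Lemma inLinf_ae (R : realType) d (T : measurableType d)
  (mu : {measure set T -> \bar R}) (Om : set T) (g : T -> R) :
  inLinf mu Om g -> {ae mu, forall x, Om x -> `|g x| <= fine (Linf_norm mu Om g)}.
Proof. by case=> _ H; apply: Linf_ae. Qed.

Lemma inLinf_ex (R : realType) d (T : measurableType d)
  (mu : {measure set T -> \bar R}) (Om : set T) (g : T -> R) :
  inLinf mu Om g -> exists C, {ae mu, forall x, Om x -> `|g x| <= C}.
Proof. by move=> H; exists (fine (Linf_norm mu Om g)); apply: inLinf_ae. Qed.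

Lemma aeAnd (R : realType) d (T : measurableType d)
  (mu : {measure set T -> \bar R}) (Om : set T) (P Q : T -> Prop) :
  {ae mu, forall x, Om x -> P x} -> {ae mu, forall x, Om x -> Q x} ->
  {ae mu, forall x, Om x -> P x /\ Q x}.
Proof. by move=> A B; apply: (filterS2 _ _ A B) => x a b Ox; split; [apply: a|apply: b]. Qed.

Lemma maxB1 (R : realType) (a : R) : Num.max a 1 - 1 = Num.max (a - 1) 0.
Proof.
by rewrite addr_maxl subrr.
Qed.

Lemma absdiff (R : realType) (a b U : R) : 0 <= a -> a <= U -> 0 <= b -> b <= U ->
  `|a - b| <= 2 * U.
Proof. move=> *; rewrite ler_norml; apply/andP; split; lra. Qed.

Unset Implicit Arguments. Set Strict Implicit.

Theorem corollary2p3 (R : realType) (d : measure_display) (T : measurableType d)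
  (mu : {measure set T -> \bar R}) (Om : set T)
  (mOm : measurable Om) (finOm : (mu Om < +oo)%E)
  (d1 d2 f kappa : R) (d1_gt0 : 0 < d1) (d2_gt0 : 0 < d2)
  (f_gt0 : 0 < f) (kappa_gt0 : 0 < kappa)
  (gam1 gam2 : T -> T -> R) (gaminf : R) (gaminf_ge1 : 1 <= gaminf)
  (mgam1 : measurable_fun (Om `*` Om) (fun p : T * T => gam1 p.1 p.2))
  (mgam2 : measurable_fun (Om `*` Om) (fun p : T * T => gam2 p.1 p.2))
  (gam1_ge0 : forall x y, Om x -> Om y -> 0 <= gam1 x y)
  (gam2_ge0 : forall x y, Om x -> Om y -> 0 <= gam2 x y)
  (gam1_sym : forall x, Om x ->
     (\int[mu]_(y in Om) (gam1 y x)%:E = \int[mu]_(y in Om) (gam1 x y)%:E)%E)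
  (gam2_sym : forall x, Om x ->
     (\int[mu]_(y in Om) (gam2 y x)%:E = \int[mu]_(y in Om) (gam2 x y)%:E)%E)
  (gam1_bd : forall x, Om x -> (\int[mu]_(y in Om) (gam1 x y)%:E <= gaminf%:E)%E)
  (gam2_bd : forall x, Om x -> (\int[mu]_(y in Om) (gam2 x y)%:E <= gaminf%:E)%E)
  (u0 v0 : T -> R) (u0_pos : inLinf_pos mu Om u0) (v0_pos : inLinf_pos mu Om v0)
  (u v u' v' : R -> T -> R)
  (u_C1 : C1_Linf mu Om u u') (v_C1 : C1_Linf mu Om v v')
  (u_pos : forall t, 0 <= t -> inLinf_pos mu Om (u t))
  (v_pos : forall t, 0 <= t -> inLinf_pos mu Om (v t))
  (u_eq : forall t, 0 < t -> {ae mu, forall x, Om x ->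
     u' t x = d1 * Gamma mu Om gam1 (u t) x - u t x * v t x ^+ 2
              + f * (1 - u t x)})
  (v_eq : forall t, 0 < t -> {ae mu, forall x, Om x ->
     v' t x = d2 * Gamma mu Om gam2 (v t) x + u t x * v t x ^+ 2
              - (f + kappa) * v t x})
  (u_init : Linf_eq mu Om (u 0) u0) (v_init : Linf_eq mu Om (v 0) v0) :
  let N0u := fine (Linf_norm mu Om u0) in
  let N0uv := fine (Linf_norm mu Om (fun x => u0 x + v0 x)) in
  let m := fine (Linf_norm mu Om
             (fun x => \int[mu]_(y in Om) `|gam1 x y - gam2 x y|)) in
  [/\ (forall t, 0 <= t -> {ae mu, forall x, Om x ->
         0 <= u t x <= 1 + expR (- f * t) * Num.max (N0u - 1) 0}),
      (forall t, 0 <= t -> {ae mu, forall x, Om x ->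
         0 <= u t x + v t x <=
           expR (- t * f) * N0uv
           + (1 - expR (- t * f)) / f
             * (2 * (`|d1 - d2| * gaminf + m * d2) * (1 + N0u) + f)}),
      (Linf_norm mu Om (fun x => (\int[mu]_(y in Om) `|gam1 x y - gam2 x y|)%R)
         <= (2 * gaminf)%:E)%E,
      (forall e : R, 0 < e -> exists T0 : R, forall t, T0 <= t ->
         (Linf_norm mu Om (u t) <= (1 + e)%:E)%E) &
      ((Linf_norm mu Om u0 <= 1%:E)%E ->
         forall t, 0 <= t -> (Linf_norm mu Om (u t) <= 1%:E)%E)].
Proof.
move=> N0u N0uv m.
case: u_C1 => uL [uD _]; case: v_C1 => vL [vD _].
have sec1 : forall x, Om x -> measurable_fun Om (gam1 x).
  by move=> x Ox; exact: sec_meas.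
have sec2 : forall x, Om x -> measurable_fun Om (gam2 x).
  by move=> x Ox; exact: sec_meas.
have int1 : forall x, Om x -> mu.-integrable Om (EFin \o gam1 x).
  by move=> x Ox; exact: (int_g mOm (sec1 x Ox) (fun y Oy => gam1_ge0 x y Ox Oy) (gam1_bd x Ox)).
have int2 : forall x, Om x -> mu.-integrable Om (EFin \o gam2 x).
  by move=> x Ox; exact: (int_g mOm (sec2 x Ox) (fun y Oy => gam2_ge0 x y Ox Oy) (gam2_bd x Ox)).
have Rint1 : forall x, Om x -> \int[mu]_(y in Om) gam1 x y <= gaminf.
  by move=> x Ox; exact: (Rint_le_G (fun y Oy => gam1_ge0 x y Ox Oy) (gam1_bd x Ox)).
have Rint2 : forall x, Om x -> \int[mu]_(y in Om) gam2 x y <= gaminf.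
  by move=> x Ox; exact: (Rint_le_G (fun y Oy => gam2_ge0 x y Ox Oy) (gam2_bd x Ox)).
have C3 : (Linf_norm mu Om (fun x => (\int[mu]_(y in Om) `|gam1 x y - gam2 x y|)%R)
         <= (2 * gaminf)%:E)%E.
  apply: ae_Linf; apply: aeW => x Ox.
  have ik := intRB mOm (int1 x Ox) (int2 x Ox).
  have ia := integrable_norm ik.
  have is2 := intRD mOm (int1 x Ox) (int2 x Ox).
  rewrite ger0_norm; last by apply: Rintegral_ge0 => y _; exact: normr_ge0.
  apply: (le_trans (le_Rintegral mOm ia is2 _)).
    move=> y Oy /=; have a := gam1_ge0 x y Ox Oy; have b := gam2_ge0 x y Ox Oy.
    apply: (le_trans (ler_normB _ _)); rewrite !ger0_norm //.
  rewrite (RintegralD mOm (int1 x Ox) (int2 x Ox)); have HH := lerD (Rint1 x Ox) (Rint2 x Ox).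
  have E2 : gaminf + gaminf = 2 * gaminf by ring.
  rewrite -E2; exact: HH.
have mae : {ae mu, forall x, Om x -> \int[mu]_(y in Om) `|gam1 x y - gam2 x y| <= m}.
  have := Linf_ae (le_lt_trans C3 (ltry _)); apply: filterS => x H Ox.
  exact: (le_trans (ler_norm _) (H Ox)).
have N0u0 : 0 <= N0u by apply: Linf_fine_ge0.
have C1 : forall t, 0 <= t -> {ae mu, forall x, Om x ->
         0 <= u t x <= 1 + expR (- f * t) * Num.max (N0u - 1) 0}.
  have Hc := @comparison R d T mu Om u u' (d1 * gaminf) f f (Num.max N0u 1) f_gt0
    ltac:(by rewrite mulr_ge0 // ltW // (lt_le_trans ltr01 gaminf_ge1)) (ltW f_gt0)
    ltac:(by rewrite le_max N0u0).
  move=> t t0.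
  have := Hc (fun t t0 => inLinf_ex (u_pos t t0).1) (fun t t0 => inLinf_ex (uL t t0).2).
  have hD : forall t, 0 <= t -> forall e, 0 < e -> exists2 del, 0 < del &
     forall h, h != 0 -> `|h| < del -> 0 <= t + h ->
     {ae mu, forall x, Om x -> `|(u (t + h) x - u t x) / h - u' t x| <= e}.
    move=> s s0 e e0; have [del dp Hd] := uD s s0 e e0; exists del => // h hn hl ht.
    exact: Linf_le_ae (ltW e0) (Hd h hn hl ht).
  move=> /(_ hD) {hD}.
  have h0 : {ae mu, forall x, Om x -> u 0 x <= Num.max N0u 1}.
    apply: (filterS2 _ _ u_init (inLinf_ae u0_pos.1)) => x e1 e2 Ox.
    rewrite (e1 Ox); apply: (le_trans (ler_norm _)); apply: (le_trans (e2 Ox)).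
    by rewrite le_max lexx.
  move=> /(_ h0) {h0}.
  have hE : forall t, 0 < t -> forall c, 0 <= c -> {ae mu, forall x, Om x -> u t x <= c} ->
     {ae mu, forall x, Om x -> u' t x <= d1 * gaminf * (c - u t x) + f - f * u t x}.
    move=> s sp c c0 Hc'.
    have us := u_pos s (ltW sp).
    have [Cu HCu] := inLinf_ex us.1.
    have mus : measurable_fun Om (u s) := us.1.1.
    apply: (filterS3 _ _ (u_eq s sp) Hc' us.2) => x e1 e2 e3 Ox.
    have G := Gam_up mOm (int1 x Ox) (fun y Oy => gam1_ge0 x y Ox Oy) (Rint1 x Ox) mus HCu Hc' (e2 Ox).
    rewrite (e1 Ox) /Gamma.
    have p1 := ler_wpM2l (ltW d1_gt0) G.
    have p2 : 0 <= u s x * v s x ^+ 2 by rewrite mulr_ge0 // ?sqr_ge0 // e3.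
    nra.
  move=> /(_ hE) {hE} /(_ t t0) H.
  apply: (filterS2 _ _ H (u_pos t t0).2) => x e1 e2 Ox.
  rewrite e2 //=; move: (e1 Ox); rewrite divff ?gt_eqF // maxB1 mulNr.
  done.
have Ubd : forall t, 0 <= t -> {ae mu, forall x, Om x -> 0 <= u t x <= 1 + N0u}.
  move=> t t0; apply: filterS (C1 t t0) => x H Ox.
  have /andP [a b] := H Ox; rewrite a /=; apply: (le_trans b).
  have E0 := expR_ge0 (- f * t).
  have E1 : expR (- f * t) <= 1 by rewrite expR_le1 mulNr oppr_le0 mulr_ge0 // ltW.
  have M0 : 0 <= Num.max (N0u - 1) 0 by rewrite le_max lexx orbT.
  have M1 : Num.max (N0u - 1) 0 <= N0u by rewrite ge_max N0u0 andbT; lra.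
  have := ler_wpM2r M0 E1; rewrite mul1r; lra.
pose K := 2 * (`|d1 - d2| * gaminf + m * d2) * (1 + N0u) + f.
have N0uv0 : 0 <= N0uv by apply: Linf_fine_ge0.
have g0 : 0 <= gaminf by rewrite (le_trans ler01).
have m0 : 0 <= m by apply: Linf_fine_ge0.
have K0 : 0 <= K.
  rewrite /K; have := normr_ge0 (d1 - d2); move=> h1.
  have : 0 <= `|d1 - d2| * gaminf + m * d2 by rewrite addr_ge0 // mulr_ge0 // ltW.
  move=> h2; have : 0 <= 2 * (`|d1 - d2| * gaminf + m * d2) * (1 + N0u).
    by rewrite !mulr_ge0 //; lra.
  lra.
have C2 : forall t, 0 <= t -> {ae mu, forall x, Om x ->
         0 <= u t x + v t x <=
           expR (- t * f) * N0uv
           + (1 - expR (- t * f)) / f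
             * (2 * (`|d1 - d2| * gaminf + m * d2) * (1 + N0u) + f)}.
  have Hc := @comparison R d T mu Om (fun t x => u t x + v t x) (fun t x => u' t x + v' t x)
    (d2 * gaminf) K f N0uv f_gt0 ltac:(by rewrite mulr_ge0 // ltW) K0 N0uv0.
  move=> t t0.
  have hw : forall t, 0 <= t -> exists C, {ae mu, forall x, Om x -> `|u t x + v t x| <= C}.
    move=> s s0; have [C1' H1] := inLinf_ex (u_pos s s0).1.
    have [C2' H2] := inLinf_ex (v_pos s s0).1.
    exists (C1' + C2'); apply: (filterS2 _ _ H1 H2) => x a b Ox.
    by apply: (le_trans (ler_normD _ _)); apply: lerD; [apply: a | apply: b].
  have hw' : forall t, 0 <= t -> exists C, {ae mu, forall x, Om x -> `|u' t x + v' t x| <= C}.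
    move=> s s0; have [C1' H1] := inLinf_ex (uL s s0).2.
    have [C2' H2] := inLinf_ex (vL s s0).2.
    exists (C1' + C2'); apply: (filterS2 _ _ H1 H2) => x a b Ox.
    by apply: (le_trans (ler_normD _ _)); apply: lerD; [apply: a | apply: b].
  move: (Hc hw hw') => {hw hw'} Hc.
  have hD : forall t, 0 <= t -> forall e, 0 < e -> exists2 del, 0 < del &
     forall h, h != 0 -> `|h| < del -> 0 <= t + h ->
     {ae mu, forall x, Om x -> `|((u (t + h) x + v (t + h) x) - (u t x + v t x)) / h
        - (u' t x + v' t x)| <= e}.
    move=> s s0 e e0.
    have e2 : 0 < e / 2 by rewrite divr_gt0.
    have [del1 dp1 Hd1] := uD s s0 _ e2.
    have [del2 dp2 Hd2] := vD s s0 _ e2.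
    exists (Num.min del1 del2); first by rewrite lt_min dp1 dp2.
    move=> h hn; rewrite lt_min => /andP [hl1 hl2] ht.
    have A1 := Linf_le_ae (ltW e2) (Hd1 h hn hl1 ht).
    have A2 := Linf_le_ae (ltW e2) (Hd2 h hn hl2 ht).
    apply: (filterS2 _ _ A1 A2) => x a b Ox.
    have -> : ((u (s + h) x + v (s + h) x) - (u s x + v s x)) / h - (u' s x + v' s x) =
      ((u (s + h) x - u s x) / h - u' s x) + ((v (s + h) x - v s x) / h - v' s x) by ring.
    apply: (le_trans (ler_normD _ _)).
    have := a Ox; have := b Ox; lra.
  move: (Hc hD) => {hD} Hc.
  have h0 : {ae mu, forall x, Om x -> u 0 x + v 0 x <= N0uv}.
    have [Cu0 HCu0] := inLinf_ex u0_pos.1.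
    have [Cv0 HCv0] := inLinf_ex v0_pos.1.
    have L0 : (Linf_norm mu Om (fun x => (u0 x + v0 x)%R) <= (Cu0 + Cv0)%:E)%E.
      apply: ae_Linf; apply: (filterS2 _ _ HCu0 HCv0) => x a b Ox.
      by apply: (le_trans (ler_normD _ _)); apply: lerD; [apply: a | apply: b].
    have A := Linf_ae (le_lt_trans L0 (ltry _)).
    apply: (filterS3 _ _ u_init v_init A) => x a b c Ox.
    by rewrite (a Ox) (b Ox); apply: (le_trans (ler_norm _)); apply: c.
  move: (Hc h0) => {h0} Hc.
  have hE : forall t, 0 < t -> forall c, 0 <= c ->
     {ae mu, forall x, Om x -> u t x + v t x <= c} ->
     {ae mu, forall x, Om x -> u' t x + v' t x <=
        d2 * gaminf * (c - (u t x + v t x)) + K - f * (u t x + v t x)}.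
    move=> s sp c c0 Hc'.
    have s0 := ltW sp.
    have us := u_pos s s0; have vs := v_pos s s0.
    have [Cu HCu] := inLinf_ex us.1; have [Cv HCv] := inLinf_ex vs.1.
    have mus : measurable_fun Om (u s) := us.1.1.
    have mvs : measurable_fun Om (v s) := vs.1.1.
    have mws : measurable_fun Om (fun y => u s y + v s y) := measurable_funD mus mvs.
    have HCw : {ae mu, forall y, Om y -> `|u s y + v s y| <= Cu + Cv}.
      apply: (filterS2 _ _ HCu HCv) => x a b Ox.
      by apply: (le_trans (ler_normD _ _)); apply: lerD; [apply: a | apply: b].
    have U2 := Ubd s s0.
    have A := aeAnd (u_eq s sp) (v_eq s sp).
    have B := aeAnd Hc' U2.
    have Cc := aeAnd vs.2 mae.
    apply: (filterS3 _ _ A B Cc) => x a b cc Ox.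
    have [eu ev] := a Ox; have [hc /andP [hu0 hU]] := b Ox; have [hv hm] := cc Ox.
    have hUy : {ae mu, forall y, Om y -> `|u s y - u s x| <= 2 * (1 + N0u)}.
      apply: filterS U2 => y H Oy; have /andP [p q] := H Oy; exact: absdiff.
    have mh : measurable_fun Om (fun y => u s y - u s x).
      exact: (measurable_funB mus (measurable_cst _)).
    have G1 := Gam_abs mOm (int1 x Ox) mh hUy.
    have Ra : \int[mu]_(y in Om) `|gam1 x y| = \int[mu]_(y in Om) gam1 x y.
      by apply: eq_Rintegral => y /set_mem Oy /=; rewrite ger0_norm // gam1_ge0.
    rewrite Ra in G1.
    have ik := intRB mOm (int1 x Ox) (int2 x Ox).
    have G12 := Gam_abs mOm ik mh hUy.
    have Ga := Gam_up mOm (int2 x Ox) (fun y Oy => gam2_ge0 x y Ox Oy) (Rint2 x Ox) mws HCw Hc' hc.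
    have iu1 := int_gh mOm (int1 x Ox) mh hUy.
    have iu2 := int_gh mOm (int2 x Ox) mh hUy.
    have mhw : measurable_fun Om (fun y => (u s y + v s y) - (u s x + v s x)).
      exact: (measurable_funB mws (measurable_cst _)).
    have hwy : {ae mu, forall y, Om y ->
       `|(u s y + v s y) - (u s x + v s x)| <= Cu + Cv + `|u s x + v s x|}.
      apply: filterS HCw => y H Oy; apply: (le_trans (ler_normB _ _)).
      by rewrite lerD2r; apply: H.
    have iw2 := int_gh mOm (int2 x Ox) mhw hwy.
    have L1 : Gamma mu Om gam2 (v s) x =
       \int[mu]_(y in Om) (gam2 x y * ((u s y + v s y) - (u s x + v s x)))
       - \int[mu]_(y in Om) (gam2 x y * (u s y - u s x)).
      rewrite /Gamma -(RintegralB mOm iw2 iu2); apply: eq_Rintegral => y _ /=; ring.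
    have L2 : \int[mu]_(y in Om) (gam1 x y * (u s y - u s x))
       - \int[mu]_(y in Om) (gam2 x y * (u s y - u s x)) =
       \int[mu]_(y in Om) ((gam1 x y - gam2 x y) * (u s y - u s x)).
      rewrite -(RintegralB mOm iu1 iu2); apply: eq_Rintegral => y _ /=; ring.
    rewrite -L2 in G12.
    rewrite eu ev L1 /Gamma.
    set A1 := \int[mu]_(y in Om) (gam1 x y * (u s y - u s x)).
    set B1 := \int[mu]_(y in Om) (gam2 x y * (u s y - u s x)).
    set W1 := \int[mu]_(y in Om) (gam2 x y * ((u s y + v s y) - (u s x + v s x))).
    set mx := \int[mu]_(y in Om) `|gam1 x y - gam2 x y|.
    set G1x := \int[mu]_(y in Om) gam1 x y.
    have U0 : 0 <= 2 * (1 + N0u) by lra.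
    have q1 : `|A1| <= gaminf * (2 * (1 + N0u)).
      apply: (le_trans G1); apply: ler_wpM2r => //; exact: Rint1.
    have p1 : (d1 - d2) * A1 <= `|d1 - d2| * (gaminf * (2 * (1 + N0u))).
      apply: (le_trans (ler_norm _)); rewrite normrM; apply: ler_wpM2l => //.
    have q2 : A1 - B1 <= m * (2 * (1 + N0u)).
      apply: (le_trans (ler_norm _)); apply: (le_trans G12); apply: ler_wpM2r => //.
    have p2 : d2 * (A1 - B1) <= d2 * (m * (2 * (1 + N0u))).
      by apply: ler_wpM2l => //; apply: ltW.
    have p3 : d2 * W1 <= d2 * (gaminf * (c - (u s x + v s x))).
      by apply: ler_wpM2l => //; apply: ltW.
    have p4 : 0 <= kappa * v s x by rewrite mulr_ge0 // ltW.
    rewrite /K; lra.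
  move: (Hc hE) => {hE} Hc.
  move: (Hc t t0) => {Hc} H.
  apply: (filterS3 _ _ H (u_pos t t0).2 (v_pos t t0).2) => x a b c Ox.
  have E : expR (- t * f) = expR (- (f * t)) by rewrite mulNr mulrC.
  rewrite E; apply/andP; split; first by rewrite addr_ge0 // ?b ?c.
  move: (a Ox).
  suff -> : expR (- (f * t)) * N0uv + (1 - expR (- (f * t))) / f *
      (2 * (`|d1 - d2| * gaminf + m * d2) * (1 + N0u) + f) =
      K / f + expR (- (f * t)) * (N0uv - K / f) by [].
  by rewrite /K; ring.
split.
- exact: C1.
- exact: C2.
- exact: C3.
- move=> e e0.
  have M0 : 0 <= Num.max (N0u - 1) 0 by rewrite le_max lexx orbT.
  have ef : 0 < e * f by rewrite mulr_gt0.
  exists (Num.max (N0u - 1) 0 / (e * f)) => t tT.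
  have T00 : 0 <= Num.max (N0u - 1) 0 / (e * f) by rewrite divr_ge0 // ltW.
  have t0 : 0 <= t by apply: le_trans tT.
  apply: ae_Linf; apply: filterS (C1 t t0) => x H Ox.
  have /andP [a b] := H Ox; rewrite ger0_norm //; apply: (le_trans b); rewrite lerD2l.
  have E0 := expR_ge0 (- f * t).
  have E1 : expR (- f * t) * (1 + f * t) <= 1.
    have -> : expR (- f * t) = (expR (f * t))^-1 by rewrite mulNr expRN.
    rewrite -(@ler_pM2l _ (expR (f * t))) ?expR_gt0 // mulrA mulfV ?gt_eqF ?expR_gt0 //.
    by rewrite mul1r mulr1 expR_ge1Dx.
  have D1 : Num.max (N0u - 1) 0 <= e * (f * t).
    have := ler_wpM2r (ltW ef) tT; rewrite divfK ?gt_eqF //.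
    by have -> : e * (f * t) = t * (e * f) by ring.
  have P1 := ler_wpM2l E0 D1.
  have ft0 : 0 <= f * t by rewrite mulr_ge0 // ltW.
  have P2 : expR (- f * t) * (e * (f * t)) <= e * (expR (- f * t) * (1 + f * t)) - e * expR (- f * t).
    have -> : e * (expR (- f * t) * (1 + f * t)) - e * expR (- f * t) = expR (- f * t) * (e * (f * t)) by ring.
    exact: lexx.
  have P3 := ler_wpM2l (ltW e0) E1.
  have P4 : 0 <= e * expR (- f * t) by rewrite mulr_ge0 // ltW.
  lra.
- move=> H t t0.
  have N1 : N0u <= 1.
    rewrite /N0u; move: H; case: (Linf_norm mu Om u0) => [r h| h| h] /=.
    - by have : (r%:E <= 1%:E)%E := h; rewrite lee_fin.
    - exact: ler01.
    - exact: ler01.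
  have M0 : Num.max (N0u - 1) 0 <= 0 by rewrite ge_max lexx andbT subr_le0.
  apply: ae_Linf; apply: filterS (C1 t t0) => x H' Ox.
  have /andP [a b] := H' Ox; rewrite ger0_norm //; apply: (le_trans b).
  have E0 := expR_ge0 (- f * t).
  have := mulr_ge0_le0 E0 M0; lra.
Qed.
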